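(* Let $d_2,d_3\ge 2$, $k\ge 1$ and $d_1=d_2d_3-k\ge 1$, and let $H=\mathbb{C}^{d_1}\otimes\mathbb{C}^{d_2}\otimes\mathbb{C}^{d_3}$. Let $|\Phi\rangle,|\Psi\rangle\in H$ satisfy $\mathrm{rank}(\rho^{A_1}_\Phi)=\mathrm{rank}(\rho^{A_1}_\Psi)=d_1$. Then $|\Phi\rangle$ and $|\Psi\rangle$ are SLOCC equivalent if and only if $\mathcal{T}^{A_1}(\Phi)=\mathcal{T}^{A_1}(\Psi)$.
   Context: The three factors are held by parties $A_1,A_2,A_3$; $\rho^{A_1}_\Phi$ is the reduced density operator of $|\Phi\rangle\langle\Phi|$ on the first factor. Two states in a multipartite space are SLOCC equivalent if one is obtained from the other by applying $L_1\otimes L_2\otimes L_3$ with each $L_i$ an invertible linear operator on the corresponding factor. Definition of $\mathcal{T}^{A_1}$: for $|\Phi\rangle\in H$ with $\mathrm{rank}(\rho^{A_1}_\Phi)=d_1$, write $|\Phi\rangle=\sum_{i=1}^{d_1}|i\rangle^{A_1}|\phi_i\rangle^{A_2A_3}$ for a basis $\{|i\rangle\}$ of $\mathbb{C}^{d_1}$ (so the $|\phi_i\rangle$ are linearly independent and their span has orthogonal complement of dimension $k$ in $\mathbb{C}^{d_2}\otimes\mathbb{C}^{d_3}$). Let $\{|\phi_i^\perp\rangle:1\le i\le k\}$ be any basis of $\mathrm{span}\{|\phi_i\rangle:1\le i\le d_1\}^\perp$. Then $\mathcal{T}^{A_1}(\Phi)$ is the SLOCC equivalence class in $\mathbb{C}^{k}\otimes\mathbb{C}^{d_2}\otimes\mathbb{C}^{d_3}$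 of $\sum_{i=1}^k|i\rangle|\phi_i^\perp\rangle$, where $\{|i\rangle:1\le i\le k\}$ is a basis of $\mathbb{C}^k$; this class does not depend on the choices of bases. *)

(* Defs.v *)
(* C is modelled by algC (algebraic complex numbers). *)
From HB Require Import structures.
From mathcomp Require Import all_boot all_order all_algebra all_field.
Set Implicit Arguments. Unset Strict Implicit. Unset Printing Implicit Defensive.
Import Order.TTheory GRing.Theory Num.Theory.
Local Open Scope ring_scope.

(* A state in C^{d1} (x) C^{d2} (x) C^{d3}: Phi i is the (d2 x d3) coefficient
   matrix of |phi_i> in |Phi> = sum_i |i>^{A1} |phi_i>^{A2A3}
   (standard basis {|i>} of C^{d1}), i.e. (Phi i) j l = <i j l | Phi>. *)
Definition tensor3 (d1 d2 d3 : nat) := 'I_d1 -> 'M[algC]_(d2, d3).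

Definition rhoA1 d1 d2 d3 (Phi : tensor3 d1 d2 d3) : 'M[algC]_d1 :=
  \matrix_(i, i') \sum_(j < d2) \sum_(l < d3) (Phi i j l * (Phi i' j l)^*).

(* SLOCC equivalence: Psi = (L1 (x) L2 (x) L3) Phi with invertible L_i. *)
Definition slocc d1 d2 d3 (Phi Psi : tensor3 d1 d2 d3) : Prop :=
  exists (L1 : 'M[algC]_d1) (L2 : 'M[algC]_d2) (L3 : 'M[algC]_d3),
    [/\ L1 \in unitmx, L2 \in unitmx, L3 \in unitmx &
      forall i : 'I_d1,
        Psi i = \sum_(a < d1) L1 i a *: (L2 *m Phi a *m L3^T)].

Definition flatA1 d1 d2 d3 (Phi : tensor3 d1 d2 d3) : 'M[algC]_(d1, d2 * d3) :=
  \matrix_(i, x) mxvec (Phi i) 0 x.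

(* Q (a tensor in C^k (x) C^{d2} (x) C^{d3}) is sum_i |i>|phi_i^perp> for a basis
   {|phi_i^perp>} of span{|phi_i>}^perp (orthogonal complement w.r.t. the Hermitian
   inner product of C^{d2} (x) C^{d3}): its rows are linearly independent and span
   exactly the space of v with <phi_i|v> = 0 for all i. *)
Definition perp_basis_tensor d1 d2 d3 k (Phi : tensor3 d1 d2 d3)
    (Q : tensor3 k d2 d3) : Prop :=
  row_free (flatA1 Q) /\
  (flatA1 Q == kermx (map_mx Num.conj (flatA1 Phi))^T)%MS.

(* T^{A1}(Phi): the SLOCC class (as a predicate on C^k (x) C^{d2} (x) C^{d3})
   of sum_i |i>|phi_i^perp>, for any choice of basis of the complement. *)
Definition TA1 d1 d2 d3 k (Phi : tensor3 d1 d2 d3) : tensor3 k d2 d3 -> Prop :=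
  fun X => exists Q : tensor3 k d2 d3, perp_basis_tensor Phi Q /\ slocc Q X.

(* Main.v *)
Require Import Defs.
From HB Require Import structures.
From mathcomp Require Import all_boot all_order all_algebra all_field.
Import Order.TTheory GRing.Theory Num.Theory.
Local Open Scope ring_scope.
Set Implicit Arguments. Unset Strict Implicit.

Notation Cm X := (map_mx Num.conj X).

Lemma CmK m n (X : 'M[algC]_(m,n)) : Cm (Cm X) = X.
Proof. by apply/matrixP=> i j; rewrite !mxE conjCK. Qed.

Lemma sum_vec m n (X Y : 'M[algC]_(m,n)) :
  \sum_(x < m * n) mxvec X 0 x * mxvec Y 0 x = \sum_i \sum_j X i j * Y i j.
Proof.
rewrite (reindex (uncurry (@mxvec_index m n))) /=; last first.
  by case: (curry_mxvec_bij m n) => g h1 h2; exists g => y _; [apply: h1|apply: h2].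
rewrite pair_big /=; apply: eq_bigr => [[i j]] _ /=; by rewrite !mxvecE.
Qed.

Lemma pairing m n (X Y : 'M[algC]_(m,n)) :
  mxvec X *m (mxvec Y)^T = (\tr (X *m Y^T))%:M.
Proof.
apply/matrixP=> a b; rewrite !ord1 !mxE /= mulr1n.
rewrite (eq_bigr (fun x => mxvec X 0 x * mxvec Y 0 x)) => [|x _]; last by rewrite mxE.
rewrite sum_vec; apply: eq_bigr => i _; rewrite mxE; apply: eq_bigr => j _.
by rewrite mxE.
Qed.

Fact K_key : unit. Proof. exact: tt. Qed.
Definition K {m n} (L2 : 'M[algC]_m) (L3 : 'M[algC]_n) : 'M[algC]_(m*n) :=
  locked_with K_key (lin_mulmx L2 *m lin_mulmxr L3^T).

Lemma mulK m n L2 L3 (M : 'M[algC]_(m,n)) :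
  mxvec M *m K L2 L3 = mxvec (L2 *m M *m L3^T).
Proof. by rewrite /K unlock mulmxA /lin_mulmx /lin_mulmxr !mul_vec_lin. Qed.

Lemma mx_vecP m n p (X Y : 'M[algC]_(m*n, p)) :
  (forall M : 'M_(m,n), mxvec M *m X = mxvec M *m Y) -> X = Y.
Proof.
move=> H; apply/row_matrixP=> i; rewrite !rowE -(vec_mxK (delta_mx 0 i)); exact: H.
Qed.

Lemma KK m n (a c : 'M[algC]_m) (b e : 'M[algC]_n) :
  K a b *m K c e = K (c *m a) (e *m b).
Proof.
apply: mx_vecP => M; rewrite mulmxA !mulK trmx_mul !mulmxA //.
Qed.

Lemma K11 m n : K (1%:M : 'M[algC]_m) (1%:M : 'M[algC]_n) = 1%:M.
Proof. by apply: mx_vecP => M; rewrite mulK trmx1 mul1mx !mulmx1. Qed.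

Lemma Kunit m n (a : 'M[algC]_m) (b : 'M[algC]_n) :
  a \in unitmx -> b \in unitmx -> K a b \in unitmx.
Proof.
move=> ua ub; have := KK a (invmx a) b (invmx b).
by rewrite !mulVmx // K11 => /mulmx1_unit [].
Qed.

Lemma row_eqP n (u v : 'rV[algC]_n) :
  (forall w : 'rV_n, u *m w^T = v *m w^T) -> u = v.
Proof.
move=> H; apply/rowP=> j; have := H (delta_mx 0 j).
by rewrite trmx_delta -!colE => /matrixP/(_ 0 0); rewrite !mxE.
Qed.

Lemma KCT m n (a : 'M[algC]_m) (b : 'M[algC]_n) :
  (Cm (K a b))^T = K (Cm a)^T (Cm b)^T.
Proof.
apply: mx_vecP => M; apply: row_eqP => w; rewrite -(vec_mxK w); set N := vec_mx w.
rewrite mulK -mulmxA -trmx_mul.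
have -> : mxvec N *m Cm (K a b) = mxvec (Cm a *m N *m (Cm b)^T).
  rewrite -[mxvec N]CmK map_mxvec -map_mxM mulK.
  by rewrite map_mxvec !map_mxM CmK map_trmx.
rewrite !pairing; congr (_%:M).
rewrite !trmx_mul !trmxK !mulmxA mxtrace_mulC !mulmxA //.
Qed.

Definition unflat n d2 d3 (M : 'M[algC]_(n, d2 * d3)) : tensor3 n d2 d3 :=
  fun i => vec_mx (row i M).

Lemma flat_unflat n d2 d3 (M : 'M[algC]_(n, d2 * d3)) : flatA1 (unflat M) = M.
Proof. by apply/matrixP=> i x; rewrite !mxE vec_mxK mxE. Qed.

Lemma row_flat n d2 d3 (X : tensor3 n d2 d3) i : row i (flatA1 X) = mxvec (X i).
Proof. by apply/rowP=> x; rewrite !mxE. Qed.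

Definition Rel n d2 d3 (X Y : 'M[algC]_(n, d2 * d3)) : Prop :=
  exists (L1 : 'M[algC]_n) (L2 : 'M[algC]_d2) (L3 : 'M[algC]_d3),
    [/\ L1 \in unitmx, L2 \in unitmx, L3 \in unitmx & Y = L1 *m X *m K L2 L3].

Lemma slocc_Rel n d2 d3 (X Y : tensor3 n d2 d3) :
  slocc X Y <-> Rel (flatA1 X) (flatA1 Y).
Proof.
have E : forall (L1 : 'M[algC]_n) (L2 : 'M[algC]_d2) (L3 : 'M[algC]_d3) i, row i (L1 *m flatA1 X *m K L2 L3) =
    mxvec (\sum_(a < n) L1 i a *: (L2 *m X a *m L3^T)).
  move=> L1 L2 L3 i; rewrite !row_mul (mulmx_sum_row (row i L1)) mulmx_suml raddf_sum.
  apply: eq_bigr => a _; rewrite -scalemxAl row_flat mulK mxE.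
  by rewrite /= (mxvec_is_scalable (L1 i a)).
split=> [[L1 [L2 [L3 [u1 u2 u3 H]]]] | [L1 [L2 [L3 [u1 u2 u3 H]]]]].
  exists L1, L2, L3; split=> //; apply/row_matrixP=> i.
  by rewrite E row_flat H.
exists L1, L2, L3; split=> // i; apply: (can_inj mxvecK).
by rewrite -E -row_flat H.
Qed.

Lemma Rel_refl n d2 d3 (X : 'M[algC]_(n, d2 * d3)) : Rel X X.
Proof.
exists 1%:M, 1%:M, 1%:M; split; rewrite ?unitmx1 //.
by rewrite K11 mul1mx mulmx1.
Qed.

Lemma Rel_sym n d2 d3 (X Y : 'M[algC]_(n, d2 * d3)) : Rel X Y -> Rel Y X.
Proof.
move=> [L1 [L2 [L3 [u1 u2 u3 ->]]]].
exists (invmx L1), (invmx L2), (invmx L3); split; rewrite ?unitmx_inv //.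
by rewrite -!mulmxA KK !mulVmx // K11 mulmx1 mulKmx.
Qed.

Lemma Rel_trans n d2 d3 (X Y Z : 'M[algC]_(n, d2 * d3)) :
  Rel X Y -> Rel Y Z -> Rel X Z.
Proof.
move=> [L1 [L2 [L3 [u1 u2 u3 ->]]]] [M1 [M2 [M3 [v1 v2 v3 ->]]]].
exists (M1 *m L1), (M2 *m L2), (M3 *m L3); split; rewrite ?unitmx_mul ?u1 ?u2 ?u3 ?v1 ?v2 ?v3 //.
by rewrite -KK !mulmxA.
Qed.


Definition Pp n d (A : 'M[algC]_(n,d)) := kermx (map_mx Num.conj A)^T.
Definition perpb n m d (A : 'M[algC]_(n,d)) (Q : 'M[algC]_(m,d)) :=
  row_free Q /\ (Q == Pp A)%MS.

Lemma rankPp n d (A : 'M[algC]_(n,d)) : \rank (Pp A) = (d - \rank A)%N.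
Proof. by rewrite /Pp mxrank_ker mxrank_tr mxrank_map. Qed.

Lemma Rel_span n d2 d3 (X Y : 'M[algC]_(n, d2 * d3)) :
  row_free Y -> (Y <= X)%MS -> Rel X Y.
Proof.
move=> fY sYX; set L := Y *m pinvmx X.
have EY : Y = L *m X by rewrite mulmxKpV.
exists L, 1%:M, 1%:M; split; rewrite ?unitmx1 ?K11 ?mulmx1 //.
rewrite -row_full_unit /row_full eqn_leq rank_leq_row /=.
move/eqP: fY => {1}<-; rewrite {1}EY; exact: mxrankM_maxl.
Qed.

Lemma Trans n m d2 d3 (A B : 'M[algC]_(n, d2 * d3)) (Q : 'M[algC]_(m, d2 * d3)) :
  Rel A B -> perpb A Q -> exists Q', Rel Q Q' /\ perpb B Q'.
Proof.
move=> [L1 [L2 [L3 [u1 u2 u3 ->]]]] [fQ eQ].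
set N2 := (Cm L2)^T; set N3 := (Cm L3)^T.
have uN2 : N2 \in unitmx by rewrite unitmx_tr map_unitmx.
have uN3 : N3 \in unitmx by rewrite unitmx_tr map_unitmx.
set Q' := Q *m K (invmx N2) (invmx N3).
have uK : K (invmx N2) (invmx N3) \in unitmx by apply: Kunit; rewrite unitmx_inv.
exists Q'; split.
  exists 1%:M, (invmx N2), (invmx N3); split; rewrite ?unitmx1 ?unitmx_inv ?mul1mx //.
have rQ' : \rank Q' = \rank Q by rewrite mxrankMfree // row_free_unit.
have sQ : (Q' <= Pp (L1 *m A *m K L2 L3))%MS.
  rewrite /Pp sub_kermx !map_mxM !trmx_mul KCT !mulmxA -/N2 -/N3.
  rewrite /Q' -(mulmxA Q) KK !mulmxV // K11 mulmx1.
  move: (eqmxP eQ) => eQ'; have: (Q <= Pp A)%MS by rewrite eQ'.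
  by rewrite /Pp sub_kermx => /eqP ->; rewrite mul0mx.
split; first by rewrite /row_free rQ'.
rewrite -(mxrank_leqif_eq sQ).2 eqn_leq (mxrank_leqif_eq sQ).1 /=.
rewrite rQ' (eqmx_rank eQ) !rankPp mxrankMfree ?row_free_unit ?Kunit //.
by rewrite (eqmxMfull _ (_ : row_full L1)) // row_full_unit.
Qed.

Lemma perp_perp n m d (A : 'M[algC]_(n,d)) (Q : 'M[algC]_(m,d)) :
  row_free A -> perpb A Q -> perpb Q A.
Proof.
move=> fA [fQ eQ]; split=> //.
have sA : (A <= Pp Q)%MS.
  move: (eqmxP eQ) => eQ'; have: (Q <= Pp A)%MS by rewrite eQ'.
  rewrite /Pp !sub_kermx => /eqP H.
  have -> : A *m (Cm Q)^T = Cm ((Q *m (Cm A)^T)^T).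
    by rewrite trmx_mul trmxK map_mxM map_trmx CmK.
  by rewrite H trmx0 map_mx0.
rewrite -(mxrank_leqif_eq sA).2 eqn_leq (mxrank_leqif_eq sA).1 /=.
rewrite rankPp (eqmx_rank eQ) rankPp subKn ?rank_leq_col //.
Qed.

Lemma exist_perp n d k (A : 'M[algC]_(n,d)) :
  \rank (Pp A) = k -> exists Q : 'M[algC]_(k,d), perpb A Q.
Proof.
move=> e; exists (castmx (e, erefl) (row_base (Pp A))); split.
  by rewrite row_free_castmx row_base_free.
apply/eqmxP; exact: eqmx_trans (eqmx_cast _ _) (eq_row_base _).
Qed.

Lemma rho_flat d1 d2 d3 (Phi : tensor3 d1 d2 d3) :
  rhoA1 Phi = flatA1 Phi *m (Cm (flatA1 Phi))^T.
Proof.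
apply/matrixP=> i i'; rewrite !mxE.
rewrite (eq_bigr (fun x => mxvec (Phi i) 0 x * mxvec (Cm (Phi i')) 0 x)).
  rewrite sum_vec; apply: eq_bigr => j _; apply: eq_bigr => l _; by rewrite mxE.
by move=> x _; rewrite !mxE -map_mxvec mxE.
Qed.

Lemma free_rho d1 d2 d3 (Phi : tensor3 d1 d2 d3) :
  \rank (rhoA1 Phi) = d1 -> row_free (flatA1 Phi).
Proof.
move=> h; rewrite /row_free eqn_leq rank_leq_row /=.
by rewrite -{1}h rho_flat mxrankM_maxl.
Qed.

Unset Implicit Arguments.

Theorem mainTheorem9 (d1 d2 d3 k : nat)
    (hd2 : (2 <= d2)%N) (hd3 : (2 <= d3)%N) (hk : (1 <= k)%N)
    (hd1 : d1 = (d2 * d3 - k)%N) (hd1pos : (1 <= d1)%N)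
    (Phi Psi : tensor3 d1 d2 d3)
    (hPhi : \rank (rhoA1 Phi) = d1) (hPsi : \rank (rhoA1 Psi) = d1) :
  slocc Phi Psi <-> (forall X : tensor3 k d2 d3, TA1 Phi X <-> TA1 Psi X).
Proof.
have TA1_tr : forall X Y : tensor3 d1 d2 d3, Rel (flatA1 X) (flatA1 Y) ->
    forall Z : tensor3 k d2 d3, TA1 X Z -> TA1 Y Z.
  move=> X Y R Z [Q [pQ sQZ]].
  have [Q' [RQ pQ']] := Trans R pQ.
  exists (unflat Q'); split.
    by rewrite /perp_basis_tensor flat_unflat; exact: pQ'.
  apply/slocc_Rel; rewrite flat_unflat; apply: Rel_trans (Rel_sym RQ) _.
  exact/slocc_Rel.
split.
  move=> /slocc_Rel R Z; split; apply: TA1_tr => //; exact: Rel_sym.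
move=> H.
have fA := free_rho hPhi; have fB := free_rho hPsi.
have rk : \rank (Pp (flatA1 Phi)) = k.
  rewrite rankPp (eqP fA) hd1 subKn //.
  have : (0 < d2 * d3 - k)%N by rewrite -hd1.
  by rewrite subn_gt0 => /ltnW.
have [Q0 pQ0] := exist_perp rk.
have : TA1 Phi (unflat Q0).
  exists (unflat Q0); split.
    by rewrite /perp_basis_tensor flat_unflat; exact: pQ0.
  apply/slocc_Rel; exact: Rel_refl.
move/H => [Q' [pQ' sQ']].
move/slocc_Rel: sQ'; rewrite flat_unflat => RQ.
have pp' := perp_perp fB pQ'.
have [Bq [RB pB]] := Trans RQ pp'.
have pA := perp_perp fA pQ0.
apply/slocc_Rel; apply: Rel_sym; apply: Rel_trans RB _.
apply: Rel_span => //.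
move: pA.2 => /eqmxP eA; move: pB.2 => /eqmxP eB.
by rewrite eA -eB.
Qed.
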